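(* Let $0<q<1/2$, $p=1-q$, and for integers $z\ge1$ let $$P(z)=1-\sum_{k=0}^{z-1}\left(p^zq^k-q^zp^k\right)\binom{k+z-1}{k},\qquad P_{SN}(z)=1-\sum_{k=0}^{z-1}e^{-zq/p}\frac{(zq/p)^k}{k!}\left(1-\left(\frac qp\right)^{z-k}\right).$$ Let $\psi(p)=\frac qp-1-\log\frac qp-\log\frac{1}{4pq}$ (which is $>0$), let $$z_0^*=\max\left(\frac{2}{\pi\left(1-\frac qp\right)^2},\ \frac{1}{2\sqrt2}-\frac{1+\frac1{\sqrt2}}{2}\,\frac{\log\left(\frac{2\psi(p)}{\pi}\right)}{\psi(p)}\right),$$ and let $z_0=\lceil z_0^*\rceil$. Then for every integer $z\ge z_0$ we have $P_{SN}(z)<P(z)$.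
   Context: $P(z)$ is the exact probability of success of a double-spend attack by attackers with relative hash power $q$ after $z$ confirmations, and $P_{SN}(z)$ is Nakamoto's approximation of it. *)

(* Defs.v *)
From Stdlib Require Import Reals Lra Lia ZArith.
Open Scope R_scope.

Definition P_exact (q : R) (z : nat) : R :=
  let p := 1 - q in
  1 - sum_f_R0 (fun k => (p ^ z * q ^ k - q ^ z * p ^ k) * Binomial.C (k + z - 1) k)
        (z - 1).

Definition P_SN (q : R) (z : nat) : R :=
  let p := 1 - q in
  let lam := INR z * q / p in
  1 - sum_f_R0 (fun k => exp (- lam) * lam ^ k / INR (fact k) * (1 - (q / p) ^ (z - k)))
        (z - 1).

Definition psi (q : R) : R :=
  let p := 1 - q in
  q / p - 1 - ln (q / p) - ln (1 / (4 * p * q)).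

Definition z0_star (q : R) : R :=
  let p := 1 - q in
  Rmax (2 / (PI * (1 - q / p) ^ 2))
       (1 / (2 * sqrt 2) - (1 + 1 / sqrt 2) / 2 * (ln (2 * psi q / PI) / psi q)).

Definition ceilZ (x : R) : Z := (- Int_part (- x))%Z.

Definition z0 (q : R) : Z := ceilZ (z0_star q).

(* Main.v *)
Require Import Defs.
From Stdlib Require Import Reals ZArith Lra Lia.
Open Scope R_scope.

Fixpoint sm (f : nat -> R) (n : nat) : R :=
  match n with O => 0 | S m => sm f m + f m end.

Lemma sum_f_R0_sm f n : sum_f_R0 f n = sm f (S n).
Proof. induction n; simpl; [lra| rewrite IHn; simpl; lra]. Qed.

Lemma sm_ext f g n : (forall k, (k < n)%nat -> f k = g k) -> sm f n = sm g n.
Proof. induction n; intros H; simpl; auto. rewrite IHn by (intros; apply H; lia). rewrite H by lia; auto. Qed.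

Lemma sm_le f g n : (forall k, (k < n)%nat -> f k <= g k) -> sm f n <= sm g n.
Proof. induction n; intros H; simpl; [lra|]. assert (H1:= H n ltac:(lia)). assert (sm f n <= sm g n) by (apply IHn; intros; apply H; lia). lra. Qed.

Lemma sm_nonneg f n : (forall k, (k < n)%nat -> 0 <= f k) -> 0 <= sm f n.
Proof. intros H. replace 0 with (sm (fun _ => 0) n). apply sm_le; auto.
 induction n; simpl; auto. rewrite IHn; [lra|intros; apply H; lia]. Qed.

Lemma sm_split f a b : sm f (a + b) = sm f a + sm (fun k => f (a + k)%nat) b.
Proof. induction b; simpl. rewrite Nat.add_0_r; lra. rewrite Nat.add_succ_r; simpl; rewrite IHb; lra. Qed.

Lemma sm_plus f g n : sm (fun k => f k + g k) n = sm f n + sm g n.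
Proof. induction n; simpl; lra. Qed.

Lemma sm_scal c f n : sm (fun k => c * f k) n = c * sm f n.
Proof. induction n; simpl; [lra|]. rewrite IHn; lra. Qed.

Lemma sm_minus f g n : sm (fun k => f k - g k) n = sm f n - sm g n.
Proof. induction n; simpl; lra. Qed.

Lemma pow_le1 r k : 0 <= r <= 1 -> r ^ k <= 1.
Proof. intros H; induction k; simpl; [lra|]. assert (0 <= r^k) by (apply pow_le; lra). nra. Qed.

Definition et (x : R) (k : nat) : R := x ^ k / INR (fact k).

Lemma exp_cv x : Un_cv (fun N => sm (et x) (S N)) (exp x).
Proof.
  unfold exp. destruct (exist_exp x) as [l Hl]. simpl.
  intros eps He. destruct (Hl eps He) as [N HN]. exists N. intros n Hn.
  specialize (HN n Hn). change (R_dist (sm (et x) (S n)) l < eps). rewrite <- sum_f_R0_sm.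
  replace (sum_f_R0 (et x) n) with (sum_f_R0 (fun i => / INR (fact i) * x ^ i) n); auto.
  apply sum_eq. intros; unfold et, Rdiv; lra.
Qed.

Lemma et_nonneg x k : 0 <= x -> 0 <= et x k.
Proof. intros; unfold et. apply Rmult_le_pos. apply pow_le; auto.
  left; apply Rinv_0_lt_compat, INR_fact_lt_0. Qed.

Lemma exp_ge_sm x n : 0 <= x -> sm (et x) n <= exp x.
Proof.
  intros Hx. destruct n. simpl. left; apply exp_pos.
  apply (growing_ineq (fun N => sm (et x) (S N))).
  - intros m. simpl. assert (0 <= et x (S m)) by (apply et_nonneg; auto). simpl in *. lra.
  - apply exp_cv.
Qed.

Lemma cv_const c : Un_cv (fun _ => c) c.
Proof. intros eps He; exists O; intros; unfold Rdist; rewrite Rminus_diag, Rabs_R0; auto. Qed.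

Lemma exp_tail_cmp r y n : 0 <= y -> 0 <= r <= 1 ->
  exp (r * y) - sm (et (r * y)) n <= r ^ n * (exp y - sm (et y) n).
Proof.
  intros Hy Hr.
  set (c := fun k => r ^ k * et y k - r ^ n * et y k).
  assert (Hc : forall k, et (r * y) k - r ^ n * et y k = c k).
  { intros k; unfold c, et. rewrite Rpow_mult_distr. unfold Rdiv; ring. }
  assert (Hmin : forall N, sm c N <= sm c n).
  { intros N. destruct (le_lt_dec n N) as [HN|HN].
    - replace N with (n + (N - n))%nat by lia. rewrite sm_split.
      assert (sm (fun k => c (n + k)%nat) (N - n) <= 0); [|lra].
      replace 0 with (sm (fun _ => 0) (N-n)).
      2:{ clear. induction (N-n)%nat; simpl; auto. rewrite IHn0; lra. }
      apply sm_le. intros k _. unfold c.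
      assert (r ^ (n + k) <= r ^ n).
      { rewrite pow_add. assert (0 <= r^n) by (apply pow_le; lra).
        assert (r ^ k <= 1) by (apply pow_le1; lra). nra. }
      assert (0 <= et y (n+k)) by (apply et_nonneg; auto). nra.
    - replace n with (N + (n - N))%nat by lia. rewrite sm_split.
      assert (0 <= sm (fun k => c (N + k)%nat) (n - N)); [|lra].
      apply sm_nonneg. intros k Hk. unfold c.
      assert (r ^ n <= r ^ (N + k)).
      { replace n with ((N + k) + (n - N - k))%nat by lia.
        rewrite pow_add. assert (0 <= r^(N+k)) by (apply pow_le; lra).
        assert (r ^ (n - N - k) <= 1) by (apply pow_le1; lra). nra. }
      assert (0 <= et y (N+k)) by (apply et_nonneg; auto). nra. }
  assert (Hcv : Un_cv (fun N => sm (et (r*y)) (S N) - r ^ n * sm (et y) (S N)) (exp (r*y) - r^n * exp y)).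
  { apply CV_minus. apply exp_cv. apply CV_mult. apply cv_const. apply exp_cv. }
  assert (exp (r*y) - r^n * exp y <= sm (et (r*y)) n - r^n * sm (et y) n).
  { refine (@Rle_cv_lim _ (fun _ => sm (et (r*y)) n - r^n * sm (et y) n) _ _ _ Hcv (cv_const _)).
    intros N. rewrite <- !sm_scal, <- !sm_minus.
    rewrite (sm_ext (fun k => et (r*y) k - r^n*et y k) c (S N)) by (intros; apply Hc).
    rewrite (sm_ext (fun k => et (r*y) k - r^n*et y k) c n) by (intros; apply Hc). apply Hmin. }
  lra.
Qed.

Lemma C_n_0' n : Binomial.C n 0 = 1.
Proof. unfold Binomial.C. rewrite Nat.sub_0_r. simpl. field. apply INR_fact_neq_0. Qed.

Lemma C_n_n' n : Binomial.C n n = 1.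
Proof. unfold Binomial.C. rewrite Nat.sub_diag. simpl. field. apply INR_fact_neq_0. Qed.

Lemma C_nonneg n k : 0 <= Binomial.C n k.
Proof. unfold Binomial.C. apply Rmult_le_pos. apply pos_INR. left; apply Rinv_0_lt_compat.
  apply Rmult_lt_0_compat; apply INR_fact_lt_0. Qed.

Definition Fs (x y : R) (a m : nat) : R :=
  sm (fun k => Binomial.C (a + k) k * x ^ (S a) * y ^ k) m.

Lemma Fs_rec x y a m :
  Fs x y (S a) (S m) = x * Fs x y a (S m) + y * Fs x y (S a) m.
Proof.
  unfold Fs. rewrite <- !sm_scal. induction m.
  - simpl. rewrite !Nat.add_0_r, !C_n_0'. ring.
  - change (sm (fun k => Binomial.C (S a + k) k * x ^ S (S a) * y ^ k) (S (S m)))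
      with (sm (fun k => Binomial.C (S a + k) k * x ^ S (S a) * y ^ k) (S m)
            + Binomial.C (S a + S m) (S m) * x ^ S (S a) * y ^ (S m)).
    rewrite IHm. simpl sm.
    assert (E: Binomial.C (S a + S m) (S m) = Binomial.C (a + S m) m + Binomial.C (a + S m) (S m))
      by (rewrite pascal by lia; f_equal; lia).
    rewrite E. replace (S (a+m)) with (a + S m)%nat by lia. simpl. ring.
Qed.

Lemma sm_geom y m : (1 - y) * sm (fun k => y ^ k) m = 1 - y ^ m.
Proof. induction m; simpl; [ring|]. rewrite Rmult_plus_distr_l, IHm. ring. Qed.

Lemma Fs_0 x y m : x + y = 1 -> Fs x y 0 m = 1 - y ^ m.
Proof.
  intros H. unfold Fs. rewrite (sm_ext _ (fun k => x * y ^ k)).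
  2:{ intros k _. simpl. rewrite C_n_n'. ring. }
  rewrite sm_scal. replace x with (1 - y) by lra. apply sm_geom.
Qed.

Lemma Fs_1 x y a : Fs x y a 1 = x ^ (S a).
Proof. unfold Fs. simpl. rewrite Nat.add_0_r, C_n_0'. ring. Qed.

Lemma race x y : x + y = 1 -> forall a b, Fs x y a (S b) + Fs y x b (S a) = 1.
Proof.
  intros H a. induction a; intros b.
  - rewrite Fs_0 by auto. rewrite Fs_1. simpl. ring.
  - induction b.
    + rewrite Fs_1, Fs_0 by lra. simpl. ring.
    + rewrite Fs_rec. rewrite (Fs_rec y x b (S a)).
      assert (H1 := IHa (S b)). 
      transitivity (x * (Fs x y a (S (S b)) + Fs y x (S b) (S a)) + y * (Fs x y (S a) (S b) + Fs y x b (S (S a)))).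
      ring. rewrite H1, IHb. lra.
Qed.

Lemma hockey n m : sm (fun k => Binomial.C (n + k) k) (S m) = Binomial.C (n + m + 1) m.
Proof.
  induction m.
  - simpl. rewrite !C_n_0'. ring.
  - change (sm (fun k => Binomial.C (n + k) k) (S (S m))) with
      (sm (fun k => Binomial.C (n + k) k) (S m) + Binomial.C (n + S m) (S m)).
    rewrite IHm. replace (n + S m)%nat with (n + m + 1)%nat by lia.
    rewrite (pascal (n + m + 1) m) by lia.
    f_equal; lia.
Qed.

Lemma P_exact_eq q n : P_exact q (S n) = 2 * Fs q (1 - q) n (S n).
Proof.
  unfold P_exact. rewrite sum_f_R0_sm. replace (S n - 1)%nat with n by lia.
  rewrite (sm_ext _ (fun k => Binomial.C (n + k) k * (1-q) ^ (S n) * q ^ k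
                             - Binomial.C (n + k) k * q ^ (S n) * (1-q) ^ k)).
  2:{ intros k _. replace (k + S n - 1)%nat with (n + k)%nat by lia. ring. }
  rewrite sm_minus. fold (Fs (1-q) q n (S n)). fold (Fs q (1-q) n (S n)).
  assert (H := race (1-q) q ltac:(lra) n n). lra.
Qed.

Lemma Fs_lower q n : 0 < q < 1 ->
  q ^ (S n) * (1-q) ^ n * Binomial.C (n + n + 1) n <= Fs q (1 - q) n (S n).
Proof.
  intros Hq. unfold Fs. rewrite <- hockey, <- sm_scal. apply sm_le. intros k Hk.
  assert ((1-q)^n <= (1-q)^k).
  { replace n with (k + (n - k))%nat at 1 by lia. rewrite pow_add.
    assert (0 <= (1-q)^k) by (apply pow_le; lra).
    assert ((1-q)^(n-k) <= 1) by (apply pow_le1; lra). nra. }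
  assert (0 <= Binomial.C (n+k) k) by apply C_nonneg.
  assert (0 <= q^(S n)) by (apply pow_le; lra). 
  assert (0 <= q ^ S n * Binomial.C (n + k) k) by (apply Rmult_le_pos; auto).
  nra.
Qed.

Lemma C_ratio n : Binomial.C (S n + S n + 1) (S n) * (INR (S n) * INR (S (S n)))
   = Binomial.C (n + n + 1) n * (INR (S (S (n+n+1))) * INR (S (n+n+1))).
Proof.
  unfold Binomial.C.
  replace (S n + S n + 1 - S n)%nat with (S (S n)) by lia.
  replace (n + n + 1 - n)%nat with (S n) by lia.
  replace (S n + S n + 1)%nat with (S (S (n+n+1))) by lia.
  rewrite !fact_simpl. rewrite !mult_INR.
  assert (H1 := INR_fact_neq_0 n). assert (H2 := INR_fact_neq_0 (n+n+1)).
  assert (0 < INR (S n)) by (apply lt_0_INR; lia).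
  assert (0 < INR (S (S n))) by (apply lt_0_INR; lia).
  field. repeat split; lra.
Qed.

Definition beta (n : nat) : R := 2 * Binomial.C (n + n + 1) n / 4 ^ (S n).

Lemma beta_pos n : 0 < beta n.
Proof.
  unfold beta, Binomial.C. apply Rmult_lt_0_compat. apply Rmult_lt_0_compat. lra.
  apply Rmult_lt_0_compat. apply INR_fact_lt_0. apply Rinv_0_lt_compat.
  apply Rmult_lt_0_compat; apply INR_fact_lt_0.
  apply Rinv_0_lt_compat, pow_lt; lra.
Qed.

Lemma beta_bound n : 1 <= beta n ^ 2 * (16/5 * INR (S n) + 4/5).
Proof.
  induction n.
  - unfold beta. simpl. replace (0+0+1)%nat with 1%nat by lia. rewrite C_n_0'. simpl. lra.
  - assert (H := C_ratio n).
    rewrite !S_INR, !plus_INR in H. rewrite !S_INR in IHn |- *. change (INR 1) with 1 in H.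
    set (m := INR n) in *. assert (0 <= m) by apply pos_INR.
    set (c0 := Binomial.C (n + n + 1) n) in *.
    set (c1 := Binomial.C (S n + S n + 1) (S n)) in *.
    assert (Hc1 : c1 = c0 * (2*m+3) * 2 / (m+2)).
    { apply (Rmult_eq_reg_r ((m + 1) * (m + 1 + 1))). rewrite H. field. nra. nra. }
    assert (E : beta (S n) * (2*m+4) = beta n * (2*m+3)).
    { unfold beta. fold c0 c1. rewrite Hc1. replace (4 ^ S (S n)) with (4 * 4 ^ S n) by (simpl; ring).
      assert (0 < 4 ^ S n) by (apply pow_lt; lra). field. nra. }
    assert (Hb := beta_pos n). assert (Hb' := beta_pos (S n)).
    set (b := beta n) in *. set (b' := beta (S n)) in *.
    assert (K : (2*m+3)^2 * (16/5 * (m+1+1) + 4/5) >= (2*m+4)^2 * (16/5 * (m+1) + 4/5)) by nra.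
    assert (K2 : b'^2 * (16/5 * (m+1+1) + 4/5) * (2*m+4)^2 = b^2 * (2*m+3)^2 * (16/5 * (m+1+1) + 4/5)).
    { replace (b'^2 * (16/5 * (m+1+1) + 4/5) * (2*m+4)^2) with ((b' * (2*m+4))^2 * (16/5 * (m+1+1) + 4/5)) by ring.
      rewrite E. ring. }
    assert (K3 : b^2 * (2*m+3)^2 * (16/5 * (m+1+1) + 4/5) >= (2*m+4)^2) .
    { assert (0 <= b^2) by nra. 
      assert (b^2 * ((2*m+3)^2 * (16/5 * (m+1+1) + 4/5)) >= b^2 * ((2*m+4)^2 * (16/5 * (m+1) + 4/5))) by (apply Rmult_ge_compat_l; lra).
      nra. }
    assert (0 < (2*m+4)^2) by nra.
    apply (Rmult_le_reg_r ((2*m+4)^2)); [lra|]. rewrite Rmult_1_l. rewrite S_INR. fold m. lra.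
Qed.

Lemma PSN_upper q n : 0 < q < 1/2 ->
  P_SN q (S n) <= exp (- (INR (S n) * q / (1 - q))) * (q / (1 - q)) ^ (S n) * exp (INR (S n)).
Proof.
  intros Hq. unfold P_SN. rewrite sum_f_R0_sm. replace (S n - 1)%nat with n by lia.
  set (Z := INR (S n)). set (r := q / (1 - q)).
  assert (Hr : 0 < r < 1) by (unfold r; split; [apply Rdiv_lt_0_compat; lra| apply (Rmult_lt_reg_r (1-q)); [lra|]; unfold Rdiv; rewrite Rmult_assoc, Rinv_l; lra]).
  assert (HZ : 0 <= Z) by apply pos_INR.
  assert (Hl : Z * q / (1 - q) = r * Z) by (unfold r; field; lra).
  rewrite Hl. set (E := exp (- (r * Z))).
  rewrite (sm_ext _ (fun k => E * (et (r * Z) k - r ^ (S n) * et Z k))).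
  2:{ intros k Hk. unfold et. rewrite Rpow_mult_distr.
      replace (r ^ S n) with (r ^ k * r ^ (S n - k)) by (rewrite <- pow_add; f_equal; lia).
      unfold Rdiv. ring. }
  rewrite sm_scal, sm_minus, sm_scal.
  assert (H := exp_tail_cmp r Z (S n) HZ ltac:(lra)).
  assert (HE : E * exp (r * Z) = 1) by (unfold E; rewrite <- exp_plus; replace (- (r*Z) + r*Z) with 0 by ring; apply exp_0).
  assert (0 < E) by apply exp_pos.
  assert (E * (exp (r * Z) - sm (et (r * Z)) (S n)) <= E * (r ^ S n * (exp Z - sm (et Z) (S n)))) by (apply Rmult_le_compat_l; lra).
  lra.
Qed.

Lemma exp_ge4 x : 0 <= x -> 1 + x + x^2/2 + x^3/6 <= exp x.
Proof.
  intros Hx. assert (H := exp_ge_sm x 4 Hx). unfold et in H. simpl in H.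
  replace (1 + x + x ^ 2 / 2 + x ^ 3 / 6) with (0 + 1 / 1 + x * 1 / 1 + x * (x * 1) / (1 + 1) + x * (x * (x * 1)) / (1 + 1 + 1 + 1 + 1 + 1)) by field. exact H.
Qed.

Lemma e_lb : 8/3 <= exp 1.
Proof. assert (H := exp_ge4 1 ltac:(lra)). lra. Qed.

Lemma AL (ps z : R) : 0 < ps <= 1/2 ->
  z >= 1 / (2 * sqrt 2) - (1 + 1 / sqrt 2) / 2 * (ln (2 * ps / PI) / ps) ->
  16/5 * z + 4/5 <= exp (2 * z * ps).
Proof.
  intros Hps Hz.
  set (s2 := sqrt 2) in *.
  assert (Hs2 : s2 * s2 = 2) by (apply sqrt_sqrt; lra).
  assert (Hs2p : 0 < s2) by (apply sqrt_lt_R0; lra).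
  assert (Hs2b : 1.414 <= s2 <= 1.415) by (split; nra).
  assert (Hpi : 3 < PI) by (assert (H := PI2_3_2); lra).
  set (L := - ln (2 * ps / PI)).
  assert (Ha : 0 < 2 * ps / PI) by (apply Rdiv_lt_0_compat; lra).
  assert (HeL : exp L = PI / (2 * ps)).
  { unfold L. rewrite exp_Ropp, exp_ln by auto. field. split; lra. }
  assert (HL1 : 1 <= L).
  { unfold L. assert (ln (2 * ps / PI) < ln (exp (Ropp 1))).
    { apply ln_increasing; auto. rewrite exp_Ropp. assert (H3 := exp_le_3).
      assert (0 < exp 1) by apply exp_pos.
      assert (2*ps/PI <= /PI) by (unfold Rdiv; rewrite <- (Rmult_1_l (/PI)) at 2; apply Rmult_le_compat_r; [left; apply Rinv_0_lt_compat; lra| lra]).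
      assert (/PI < /3) by (apply Rinv_lt_contravar; lra).
      assert (/3 <= / exp 1) by (apply Rinv_le_contravar; lra).
      lra. }
    rewrite ln_exp in H. lra. }
  set (b := (1 + 1 / s2) / 2).
  set (zs := 1 / (2 * s2) + b * L / ps).
  assert (Hzz : z >= zs).
  { unfold zs. replace (b * L / ps) with (- (b * (ln (2 * ps / PI) / ps))) by (unfold L; field; lra). 
    unfold b. lra. }
  set (X := exp (L / s2)). set (Y := exp (ps / s2)).
  assert (HE : exp (2 * zs * ps) = Y * (PI / (2 * ps)) * X).
  { unfold Y, X. rewrite <- HeL, <- !exp_plus. f_equal. unfold zs, b. field. lra. }
  assert (HY : 1 + ps / s2 <= Y) by apply exp_ineq1_le.
  assert (HX1 : 1 + L / s2 <= X) by apply exp_ineq1_le.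
  assert (HLs : 0.7 <= L / s2).
  { apply (Rmult_le_reg_r s2); auto. unfold Rdiv. rewrite Rmult_assoc, Rinv_l by lra. nra. }
  assert (HX2 : exp 1 * (L / s2) <= X).
  { unfold X. replace (L / s2) with (1 + (L / s2 - 1)) at 2 by ring. rewrite exp_plus.
    assert (H := exp_ineq1_le (L / s2 - 1)). assert (0 < exp 1) by apply exp_pos. nra. }
  assert (HX3 : 2 <= X).
  { assert (H := exp_ge4 (L / s2) ltac:(lra)). fold X in H.
    assert (0.49 <= (L/s2)^2) by nra. assert (0.343 <= (L/s2)^3) by (simpl; nra). lra. }
  assert (He := e_lb).
  assert (Hii : 16/5 <= 2 * ps * exp (2 * zs * ps)).
  { rewrite HE. replace (2 * ps * (Y * (PI / (2 * ps)) * X)) with (PI * Y * X) by (field; lra).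
    assert (1 <= Y) by (assert (0 < ps / s2) by (apply Rdiv_lt_0_compat; lra); lra).
    assert (3 <= PI * Y) by nra. nra. }
  assert (Hi : 16/5 * zs + 4/5 <= exp (2 * zs * ps)).
  { rewrite HE.
    apply (Rmult_le_reg_r (2 * ps / PI)); [auto|].
    replace (Y * (PI / (2 * ps)) * X * (2 * ps / PI)) with (Y * X) by (field; lra).
    replace ((16 / 5 * zs + 4 / 5) * (2 * ps / PI))
      with ((2 * ps / PI) * (16 / 5 / (2 * s2) + 4/5) + (16/5 * 2 * b / PI) * L)
      by (unfold zs; field; lra).
    assert (HYX : X + ps / s2 * X <= Y * X) by (assert (0 < X) by apply exp_pos; nra).
    assert (Hb1 : 16/5 * 2 * b / PI <= 1.83).
    { unfold b. apply (Rmult_le_reg_r PI); [lra|]. unfold Rdiv. rewrite Rmult_assoc, Rinv_l by lra.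
      assert (1 / s2 <= 0.71) by (apply (Rmult_le_reg_r s2); auto; unfold Rdiv; rewrite Rmult_assoc, Rinv_l by lra; nra).
      unfold Rdiv in H. nra. }
    assert (Hp1 : 0 <= 16/5 * 2 * b / PI).
    { unfold b. assert (0 < 1/s2) by (apply Rdiv_lt_0_compat; lra). 
      apply Rmult_le_pos; [|left; apply Rinv_0_lt_compat; lra]. lra. }
    assert (T1 : (16/5 * 2 * b / PI) * L <= X).
    { assert (1.83 * L <= X).
      { assert (exp 1 * (L / s2) >= 8/3 * (L / 1.415)).
        { assert (L / s2 >= L / 1.415).
          { unfold Rdiv. apply Rmult_ge_compat_l; [lra|]. apply Rle_ge, Rinv_le_contravar; lra. }
          assert (L / 1.415 >= 0) by (unfold Rdiv; nra). nra. }
        lra. }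
      nra. }
    assert (T2 : (2 * ps / PI) * (16 / 5 / (2 * s2) + 4/5) <= ps / s2 * X).
    { replace ((2 * ps / PI) * (16 / 5 / (2 * s2) + 4/5)) with ((ps / s2) * ((16/5 + 8/5 * s2) / PI)) by (field; lra).
      assert (0 < ps / s2) by (apply Rdiv_lt_0_compat; lra).
      assert ((16/5 + 8/5 * s2) / PI <= 2).
      { apply (Rmult_le_reg_r PI); [lra|]. unfold Rdiv. rewrite Rmult_assoc, Rinv_l by lra. nra. }
      nra. }
    lra. }
  replace (2 * z * ps) with (2 * zs * ps + 2 * ps * (z - zs)) by ring.
  rewrite exp_plus.
  assert (H1 := exp_ineq1_le (2 * ps * (z - zs))).
  assert (0 < exp (2 * zs * ps)) by apply exp_pos.
  assert (exp (2 * zs * ps) * (1 + 2 * ps * (z - zs)) <= exp (2 * zs * ps) * exp (2 * ps * (z - zs))) by (apply Rmult_le_compat_l; lra).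
  assert (0 <= z - zs) by lra.
  nra.
Qed.

Lemma psi_eq q : 0 < q < 1/2 -> psi q = 1 / (1 - q) - 2 + 2 * ln (2 * (1 - q)).
Proof.
  intros Hq. unfold psi. set (p := 1 - q).
  assert (0 < p) by (unfold p; lra).
  unfold Rdiv. rewrite !Rmult_1_l. rewrite ln_mult, ln_Rinv by (try apply Rinv_0_lt_compat; lra).
  rewrite ln_Rinv by (repeat apply Rmult_lt_0_compat; lra).
  rewrite !ln_mult by (try apply Rmult_lt_0_compat; lra).
  replace 4 with (2 * 2) by ring. rewrite ln_mult by lra.
  replace (q * / p) with (/ p - 1) by (unfold p; field; lra). ring.
Qed.

Lemma psi_bounds q : 0 < q < 1/2 -> 0 < psi q <= 1/2.
Proof.
  intros Hq. rewrite psi_eq by auto. set (x := 2 * (1 - q)).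
  assert (Hx : 1 < x < 2) by (unfold x; lra).
  replace (1 / (1 - q)) with (2 / x) by (unfold x; field; lra).
  assert (Hinv : x * (1 / x) = 1) by (field; lra).
  split.
  - assert (H := exp_ineq1 (ln (1 / x))).
    assert (ln (1/x) <> 0).
    { intro H0. assert (exp (ln (1/x)) = 1) by (rewrite H0; apply exp_0).
      rewrite exp_ln in H1 by (apply Rdiv_lt_0_compat; lra). nra. }
    specialize (H H0). rewrite exp_ln in H by (apply Rdiv_lt_0_compat; lra).
    unfold Rdiv in H. rewrite Rmult_1_l, ln_Rinv in H by lra. unfold Rdiv. lra.
  - assert (Hl2 : ln 2 < 3/4).
    { assert (H := exp_ge4 (3/4) ltac:(lra)). rewrite <- (ln_exp (3/4)).
      apply ln_increasing; lra. }
    assert (H := exp_ineq1_le (ln (x / 2))).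
    rewrite exp_ln in H by (apply Rdiv_lt_0_compat; lra).
    unfold Rdiv in H. rewrite ln_mult, ln_Rinv in H by (try apply Rinv_0_lt_compat; lra).
    assert (x / 2 + 1 / x <= 3 / 2).
    { apply (Rmult_le_reg_r x); [lra|]. rewrite Rmult_plus_distr_r, (Rmult_comm (1/x)), Hinv. nra. }
    unfold Rdiv in *. lra.
Qed.

Lemma z0_le q n : (z0 q <= Z.of_nat n)%Z -> z0_star q <= INR n.
Proof.
  intros H. unfold z0, ceilZ in H. apply IZR_le in H. rewrite <- INR_IZR_INZ in H.
  rewrite opp_IZR in H. destruct (base_Int_part (- z0_star q)). lra.
Qed.

Theorem mainTheorem17 (q : R) (hq0 : 0 < q) (hq1 : q < 1 / 2) (z : nat) :
  (1 <= z)%nat -> (z0 q <= Z.of_nat z)%Z -> P_SN q z < P_exact q z.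
Proof.
  intros Hz1 Hz0. destruct z as [|n]; [lia|].
  assert (Hq : 0 < q < 1/2) by lra.
  destruct (psi_bounds q Hq) as [Hps1 Hps2].
  assert (Hzs := z0_le q (S n) Hz0).
  set (Z := INR (S n)) in *.
  assert (HZ : 0 < Z) by (apply lt_0_INR; lia).
  assert (HAL : 16/5 * Z + 4/5 <= exp (2 * Z * psi q)).
  { apply AL; auto. apply Rle_ge. eapply Rle_trans; [|exact Hzs]. unfold z0_star. apply Rmax_r. }
  set (p := 1 - q) in *. set (r := q / p).
  assert (Hp : 0 < p) by (unfold p; lra).
  assert (Hr : 0 < r) by (apply Rdiv_lt_0_compat; lra).
  assert (H4pq : 0 < 4 * p * q) by (repeat apply Rmult_lt_0_compat; lra).
  assert (HU := PSN_upper q n Hq). fold Z p r in HU.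
  set (U := exp (- (Z * q / p)) * r ^ S n * exp Z) in HU.
  assert (HP : P_exact q (S n) >= (4 * p * q) ^ S n * (1 + r) * beta n).
  { rewrite P_exact_eq. fold p. assert (H := Fs_lower q n ltac:(lra)). fold p in H.
    apply Rle_ge. eapply Rle_trans; [|apply Rmult_le_compat_l; [lra|exact H]].
    unfold beta, r. rewrite !Rpow_mult_distr. simpl pow.
    right. unfold p. field. split; [|lra]. apply Rgt_not_eq, pow_lt; lra. }
  set (X := 16/5 * Z + 4/5) in *.
  assert (HX : 0 < X) by (unfold X; lra).
  set (s := sqrt X).
  assert (Hs : 0 < s) by (apply sqrt_lt_R0; auto).
  assert (Hb : 1 <= beta n * s).
  { assert (H := beta_bound n). fold Z X in H. assert (Hb := beta_pos n).
    assert (sqrt (beta n ^ 2 * X) = beta n * s).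
    { unfold s. rewrite sqrt_mult by (try apply pow_le; lra). f_equal. simpl. rewrite Rmult_1_r. apply sqrt_square; lra. }
    rewrite <- H0. rewrite <- sqrt_1. apply sqrt_le_1_alt. auto. }
  assert (HUs : U * s <= (4 * p * q) ^ S n).
  { assert (Hs2 : s <= exp (Z * psi q)).
    { unfold s. rewrite <- (sqrt_square (exp (Z * psi q))) by (left; apply exp_pos).
      apply sqrt_le_1_alt. rewrite <- exp_plus. replace (Z * psi q + Z * psi q) with (2 * Z * psi q) by ring. auto. }
    assert (0 <= U) by (unfold U; apply Rmult_le_pos; [apply Rmult_le_pos|]; [left; apply exp_pos| apply pow_le; lra | left; apply exp_pos]).
    apply Rle_trans with (U * exp (Z * psi q)); [apply Rmult_le_compat_l; auto|].
    right. unfold U.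
    rewrite <- (exp_ln (r ^ S n)) by (apply pow_lt; auto).
    rewrite <- (exp_ln ((4 * p * q) ^ S n)) by (apply pow_lt; auto).
    rewrite !ln_pow by auto. fold Z. rewrite <- !exp_plus. f_equal.
    unfold psi. fold p. fold r. replace (ln (1 / (4 * p * q))) with (- ln (4 * p * q)) by (unfold Rdiv; rewrite Rmult_1_l, ln_Rinv; auto).
    unfold r. field. lra. }
  assert (W : 0 < (4 * p * q) ^ S n) by (apply pow_lt; auto).
  assert (Hbp := beta_pos n).
  assert (U * s < (4 * p * q) ^ S n * (1 + r) * beta n * s).
  { apply Rle_lt_trans with ((4 * p * q) ^ S n); auto.
    assert ((4 * p * q) ^ S n < (4 * p * q) ^ S n * (1 + r)) by nra.
    nra. }
  assert (U < (4 * p * q) ^ S n * (1 + r) * beta n).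
  { apply (Rmult_lt_reg_r s); auto. }
  lra.
Qed.
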